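(* There is an absolute constant $c>0$ such that the following holds. Let $\delta>0$, let $q$ and $N$ be positive integers, and let $T$ be an $N$-vertex tournament that is $\delta$-far from transitive. Then any coloring of the edges of $T$ with $q$ colors contains a directed path with at least $c\delta^2N/q^3$ vertices whose edges receive at most three colors. Furthermore, there are distinct vertices $v_1,\dots,v_L$ with $L\geq c\delta^2N/q^3$ such that $v_j\to v_{j+1}$ for all $1\leq j<L$, $v_{j+2}\to v_j$ for all $1\leq j\leq L-2$, and the colors of the edges $v_jv_{j+1}$ and of the edges $v_jv_{j+2}$ are periodic in $j$ with period $3$ (i.e. the color of $v_jv_{j+1}$ equals that of $v_{j+3}v_{j+4}$ and the color of $v_jv_{j+2}$ equals that of $v_{j+3}v_{j+5}$ whenever these edges exist).
   Context: A tournament is an orientation of a complete graph. An $N$-vertex tournament is $\delta$-close to transitive if it can be made transitive (acyclic) by reversing the orientation of at most $\delta N^2$ edges, and $\delta$-far from transitive otherwise. A directed path is a sequence of distinct vertices $v_1,\dots,v_L$ with $v_j\to v_{j+1}$ for all $j<L$. *)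

(* Defs.v *)
From HB Require Import structures.
From mathcomp Require Import all_boot all_order all_algebra.
From mathcomp Require Import reals.
Set Implicit Arguments. Unset Strict Implicit. Unset Printing Implicit Defensive.
Import Order.TTheory GRing.Theory Num.Theory.

Definition tournament (N : nat) (T : rel 'I_N) : Prop :=
  (forall x, ~~ T x x) /\
  (forall x y, x != y -> (T x y && ~~ T y x) || (T y x && ~~ T x y)).

Definition transitive_tournament (N : nat) (T : rel 'I_N) : Prop :=
  tournament T /\ (forall x y z, T x y -> T y z -> T x z).

(* T can be made transitive by reversing the orientation of at most k edges:
   there is a transitive tournament T' obtained from T by reversing some set
   of arcs, whose number (the arcs x -> y of T reversed in T') is at most k. *)
Definition close_to_transitive (R : realType) (N : nat) (T : rel 'I_N) (delta : R)
  : Prop :=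
  exists T' : rel 'I_N, transitive_tournament T' /\
    (#|[set p : 'I_N * 'I_N | T p.1 p.2 && ~~ T' p.1 p.2]|%:R
       <= delta * (N%:R ^+ 2))%R.

Definition far_from_transitive (R : realType) (N : nat) (T : rel 'I_N) (delta : R)
  : Prop := ~ close_to_transitive T delta.

Definition dipath (N : nat) (T : rel 'I_N) (v : nat -> 'I_N) (L : nat) : Prop :=
  (forall i j, i < L -> j < L -> v i = v j -> i = j) /\
  (forall j, j.+1 < L -> T (v j) (v j.+1)).

(* Main.v *)
Require Import Defs.
From HB Require Import structures.
From mathcomp Require Import all_boot all_order all_algebra.
From mathcomp Require Import reals.
From mathcomp Require Import zify ring lra.
Import Order.TTheory GRing.Theory Num.Theory.
Set Implicit Arguments. Unset Strict Implicit. Unset Printing Implicit Defensive.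
Definition rot {N : nat} (t : nat) (a b c : 'I_N) : 'I_N * 'I_N * 'I_N :=
  if t %% 3 == 0 then (a, b, c) else if t %% 3 == 1 then (c, a, b) else (b, c, a).

Lemma rot_succ N t (a b c : 'I_N) : rot t.+1 b c a = rot t a b c.
Proof.
have [h|[h|h]] : t %% 3 = 0 \/ t %% 3 = 1 \/ t %% 3 = 2 by lia.
- have h' : t.+1 %% 3 = 1 by lia. by rewrite /rot h h'.
- have h' : t.+1 %% 3 = 2 by lia. by rewrite /rot h h'.
- have h' : t.+1 %% 3 = 0 by lia. by rewrite /rot h h'.
Qed.

Lemma rot_mod N t (a b c : 'I_N) : rot (t %% 3) a b c = rot t a b c.
Proof. by rewrite /rot modn_mod. Qed.

Definition degS N (F : {set 'I_N * 'I_N * 'I_N}) (b c : 'I_N) (t : nat) :=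
  [set d | rot t b c d \in F].
Definition deg N (F : {set 'I_N * 'I_N * 'I_N}) b c t := #|degS F b c t|.

Definition good N k (F : {set 'I_N * 'I_N * 'I_N}) :=
  forall (b c : 'I_N) (t : 'I_3), (0 < deg F b c t)%N -> (k <= deg F b c t)%N.

Definition active N (F : {set 'I_N * 'I_N * 'I_N}) :=
  [set nu : 'I_N * 'I_N * 'I_3 | (0 < deg F nu.1.1 nu.1.2 nu.2)%N].

Lemma deg_mod N F (b c : 'I_N) t : deg F b c (t %% 3) = deg F b c t.
Proof. by rewrite /deg /degS; apply: eq_card => d; rewrite !inE rot_mod. Qed.

Lemma deg_sub N (F G : {set 'I_N * 'I_N * 'I_N}) b c t :
  F \subset G -> (deg F b c t <= deg G b c t)%N.
Proof.
move=> FG; apply: subset_leq_card; apply/subsetP => d; rewrite !inE.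
by move/(subsetP FG).
Qed.

Lemma good_next N k (F : {set 'I_N * 'I_N * 'I_N}) a b c t :
  good k F -> rot t a b c \in F -> (k <= deg F b c t.+1)%N.
Proof.
move=> gF h.
have ltm : (t.+1 %% 3 < 3)%N by rewrite ltn_mod.
have := gF b c (Ordinal ltm); rewrite /= deg_mod; apply.
apply/card_gt0P; exists a; by rewrite inE rot_succ.
Qed.

Lemma clean N k n (F : {set 'I_N * 'I_N * 'I_N}) :
  (#|F| <= n)%N -> (k.-1 * #|active F| < #|F|)%N ->
  exists F' : {set 'I_N * 'I_N * 'I_N}, [/\ F' \subset F, (0 < #|F'|)%N & good k F'].
Proof.
elim: n F => [|n IH] F hn hk.
  by move: hk; have -> : #|F| = 0%N by lia.
case: (pickP [pred nu : 'I_N * 'I_N * 'I_3 |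
   (0 < deg F nu.1.1 nu.1.2 nu.2 < k)%N]) => [[[b c] t] /= /andP [d0 dk]|none].
  pose S := degS F b c t.
  pose D := [set rot t b c d | d in S].
  have DF : D \subset F.
    by apply/subsetP => x /imsetP [d]; rewrite inE => h ->.
  have Dle : (#|D| <= deg F b c t)%N by apply: leq_imset_card.
  have D0 : (0 < #|D|)%N.
    move/card_gt0P: d0 => [d dS]; apply/card_gt0P; exists (rot t b c d).
    by apply/imsetP; exists d.
  pose F' := F :\: D.
  have cF' : #|F'| = (#|F| - #|D|)%N.
    by rewrite /F' cardsD (setIidPr DF).
  have sub' : F' \subset F by apply: subsetDl.
  have act' : active F' \subset active F :\ (b, c, t).
    apply/subsetP => nu; rewrite !inE => h; apply/andP; split.
      apply/eqP => e; move: h; rewrite e /= => /card_gt0P [d].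
      rewrite inE /F' !inE => /andP [nD inF]; case/negP: nD.
      by apply/imsetP; exists d => //; rewrite inE.
    by apply: leq_trans h (deg_sub _ _ _ sub').
  have ina : (b, c, t) \in active F by rewrite inE.
  have cA : (#|active F'| < #|active F|)%N.
    by rewrite (cardsD1 (b,c,t) (active F)) ina add1n ltnS subset_leq_card.
  have cDF : (#|D| <= #|F|)%N by apply: subset_leq_card.
  have m1 : (k.-1 * #|active F'| <= k.-1 * (#|active F|).-1)%N.
    by rewrite leq_mul2l; apply/orP; right; lia.
  have m2 : (k.-1 * (#|active F|).-1 + k.-1 = k.-1 * #|active F|)%N.
    by rewrite -mulnSr prednK //; lia.
  have e1 : (#|F'| <= n)%N by lia.
  have e2 : (k.-1 * #|active F'| < #|F'|)%N.
    move: m1 m2 hk; set x1 := k.-1 * #|active F'|; set x2 := k.-1 * _.-1.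
    set x3 := k.-1 * #|active F|; rewrite cF'. move: x1 x2 x3 => x1 x2 x3. move: Dle dk; move: (deg F b c t) #|D| #|F| => y1 y2 y3. clear. lia.
  have [F'' [h1 h2 h3]] := IH F' e1 e2.
  exists F''; split => //; exact: subset_trans h1 sub'.
exists F; split; [exact: subxx | move: hk; set x := k.-1 * _; lia | ].
move=> b c t d0; have := none (b, c, t); rewrite /= d0 /=; lia.
Qed.

Lemma walk N k (F : {set 'I_N * 'I_N * 'I_N}) (x0 : 'I_N) :
  good k F -> (0 < #|F|)%N ->
  (forall a b c, (a, b, c) \in F -> [&& a != b, b != c & c != a]) ->
  forall m, (3 <= m)%N -> (m <= maxn 3 k)%N ->
  exists s : seq 'I_N, [/\ size s = m, uniq s &
    forall j, (j.+2 < m)%N -> rot j (nth x0 s j) (nth x0 s j.+1) (nth x0 s j.+2) \in F].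
Proof.
move=> gF F0 dF; elim=> [|m IH] // m3 mk.
have [e3|gt3] : m.+1 = 3 \/ (3 <= m)%N by lia.
  move/card_gt0P: F0 => [[[a b] c] abc].
  exists [:: a; b; c]; split; first by rewrite e3.
    have := dF _ _ _ abc; rewrite /= !inE.
    case/and3P => ab bc ca; rewrite negb_or ab bc /= andbT.
    by rewrite eq_sym.
  move=> [|j]; last by rewrite e3.
  by rewrite /= /rot.
have [s [ss us hs]] := IH gt3 ltac:(lia).
have mk' : (m < k)%N by lia.
have hl := hs (m - 3)%N ltac:(lia).
have hd := good_next gF hl.
have [d dS ds] : exists2 d, d \in degS F (nth x0 s (m - 3).+1) (nth x0 s (m - 3).+2) (m - 3).+1 & d \notin s.
  apply/exists_inP; rewrite -negb_forall_in; apply/negP => /forall_inP sub.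
  have : (#|degS F (nth x0 s (m - 3).+1) (nth x0 s (m - 3).+2) (m - 3).+1| <= size s)%N.
    apply: leq_trans (card_size s); apply: subset_leq_card; apply/subsetP => y /sub; exact.
  rewrite /deg in hd; lia.
exists (rcons s d); split.
- by rewrite size_rcons ss.
- by rewrite rcons_uniq ds us.
move=> j jm; rewrite !nth_rcons ss.
have [jl|je] : (j.+2 < m)%N \/ j = (m - 2)%N by lia.
  have -> : (j < m)%N by lia.
  have -> : (j.+1 < m)%N by lia.
  rewrite jl; exact: hs.
subst j.
have -> : ((m - 2) < m)%N by lia.
have -> : ((m - 2).+1 < m)%N by lia.
have -> : ((m - 2).+2 < m)%N = false by lia.
have -> : ((m - 2).+2 == m) by apply/eqP; lia.
move: dS; rewrite inE.
have -> : (m - 3).+1 = (m - 2)%N by lia.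

done.
Qed.
Lemma card_nat (T : finType) (P : pred T) : #|[set x | P x]| = (\sum_x (P x : nat))%N.
Proof. by rewrite -sum1_card big_mkcond /=; apply: eq_bigr => x _; rewrite inE; case: (P x). Qed.

Lemma card_pair N (P : 'I_N -> 'I_N -> bool) :
  #|[set p : 'I_N * 'I_N | P p.1 p.2]| = (\sum_x #|[set y | P x y]|)%N.
Proof.
rewrite card_nat -(pair_bigA _ (fun x y => (P x y : nat))).
by apply: eq_bigr => x _; rewrite card_nat.
Qed.

Lemma card_triple N (P : 'I_N -> 'I_N -> 'I_N -> bool) :
  #|[set p : 'I_N * 'I_N * 'I_N | P p.1.1 p.1.2 p.2]| =
  (\sum_x \sum_y #|[set z | P x y z]|)%N.
Proof.
rewrite card_nat -(pair_bigA _ (fun xy z => (P xy.1 xy.2 z : nat))).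
rewrite -(pair_bigA _ (fun x y => \sum_z (P x y z : nat))).
by apply: eq_bigr => x _; apply: eq_bigr => y _; rewrite card_nat.
Qed.

Lemma tour_asym N (T : rel 'I_N) x y : tournament T -> T x y -> ~~ T y x.
Proof.
case=> irr tot Txy; have xy : x != y by apply/eqP => e; move: Txy; rewrite e (negbTE (irr y)).
by case/orP: (tot x y xy) => /andP [h1 h2] //; rewrite Txy in h2.
Qed.

Lemma tour_tot N (T : rel 'I_N) x y : tournament T -> x != y -> T x y || T y x.
Proof. by case=> _ tot xy; case/orP: (tot x y xy) => /andP [-> _] //; rewrite orbT. Qed.

Lemma tour_neq N (T : rel 'I_N) x y : tournament T -> T x y -> x != y.
Proof. by case=> irr _ Txy; apply/eqP => e; move: Txy; rewrite e (negbTE (irr y)). Qed.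

Definition outd N (T : rel 'I_N) x := #|[set y | T x y]|.
Definition bef N (T : rel 'I_N) x y :=
  (outd T y < outd T x)%N || ((outd T y == outd T x) && (x < y)%N).

Lemma bef_trans_tour N (T : rel 'I_N) : transitive_tournament (bef T).
Proof.
rewrite /transitive_tournament /tournament /bef; split; first split.
- by move=> x; rewrite ltnn ltnn andbF.
- move=> x y xy; have: (x : nat) != y by [].
  move: (outd T x) (outd T y) => a b.
  case: (ltngtP a b) => h; rewrite ?eqxx /=.
  + by [].
  + by [].
  + by move=> ne; case: (ltngtP x y) ne => //= h; rewrite ?orbT // eqxx.
- move=> x y z; move: (outd T x) (outd T y) (outd T z) => a b c.
  case/orP => [h1|/andP [/eqP e1 h1]]; case/orP => [h2|/andP [/eqP e2 h2]].
  + by rewrite (ltn_trans h2 h1).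
  + by subst; rewrite h1.
  + by subst; rewrite h2.
  + by subst; rewrite eqxx (ltn_trans h1 h2) orbT.
Qed.

Definition Yset N (T : rel 'I_N) x := [set y | T x y && bef T y x].
Definition tri N (T : rel 'I_N) x y := [set z | T y z && T z x].

Lemma pairs_in N (T : rel 'I_N) (Y : {set 'I_N}) : tournament T ->
  (2 * \sum_(y in Y) #|[set z in Y | T y z]| = #|Y| * #|Y| - #|Y|)%N.
Proof.
move=> hT.
have e1 : forall y, #|[set z in Y | T y z]| = (\sum_(z in Y) (T y z : nat))%N.
  move=> y; rewrite card_nat [RHS]big_mkcond /=; apply: eq_bigr => z _.
  by case: (z \in Y).
have S' : (\sum_(y in Y) #|[set z in Y | T y z]| = \sum_(y in Y) \sum_(z in Y) (T z y : nat))%N.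
  rewrite (eq_bigr _ (fun y _ => e1 y)).
  by rewrite exchange_big.
have e2 : forall y, y \in Y -> (\sum_(z in Y) ((T y z : nat) + (T z y : nat)) = #|Y| - 1)%N.
  move=> y yY.
  rewrite (bigD1 y) //= (negbTE (proj1 hT y)) /=.
  rewrite (eq_bigr (fun _ => 1%N)); last first.
    move=> z /andP [zY zy]; have := tour_tot hT zy; have := @tour_asym _ T z y hT.
    by case: (T z y); case: (T y z) => //= /(_ isT).
  rewrite sum1_card add0n (cardD1 y Y) yY add1n subn1 /=.
  by apply: eq_card => i; rewrite !inE andbC.
rewrite mul2n -addnn {1}S' -big_split /=.
rewrite (eq_bigr (fun _ => #|Y| - 1)%N); last first.
  move=> y yY; rewrite -(e2 y yY) e1 -big_split /=; apply: eq_bigr => z _; apply: addnC.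
rewrite sum_nat_const; case: #|Y| => // n; rewrite mulnSr; lia.
Qed.

Lemma cardsU_le (T : finType) (A B : {set T}) : (#|A :|: B| <= #|A| + #|B|)%N.
Proof. by rewrite -cardsUI leq_addr. Qed.

Lemma per_vertex N (T : rel 'I_N) x : tournament T ->
  (#|Yset T x| * #|Yset T x| <= 2 * \sum_(y in Yset T x) #|tri T x y|)%N.
Proof.
move=> hT.
set Y := Yset T x; set O := [set y | T x y].
have YO : Y \subset O by apply/subsetP => y; rewrite !inE => /andP [].
have cOY : #|O :\: Y| = (#|O| - #|Y|)%N by rewrite cardsD (setIidPr YO).
have cYO : (#|Y| <= #|O|)%N by apply: subset_leq_card.
have h2 : forall y, y \in Y ->
  (outd T y <= #|tri T x y| + #|[set z in Y | T y z]| + #|O :\: Y|)%N.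
  move=> y yY.
  have Txy : T x y by move: yY; rewrite inE => /andP [].
  apply: leq_trans (subset_leq_card (_ : _ \subset tri T x y :|: [set z in Y | T y z] :|: (O :\: Y))) _.
    apply/subsetP => z; rewrite !inE => Tyz.
    case Tzx: (T z x); first by rewrite Tyz.
    have zx : z != x.
      by apply/eqP => e; move: Tyz; rewrite e (negbTE (tour_asym hT Txy)).
    have Txz : T x z by have := tour_tot hT zx; rewrite Tzx.
    by rewrite Txz Tyz /=; case: (bef T z x).
  apply: leq_trans (cardsU_le _ _) _; rewrite leq_add2r; exact: cardsU_le.
have h3 : forall y, y \in Y -> (#|O| <= outd T y)%N.
  move=> y; rewrite inE /bef => /andP [_ /orP [h|/andP [/eqP h _]]].
    by apply: ltnW.
  by rewrite /O -/(outd T x) h.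
have h4 := pairs_in Y hT.
have s1 : (#|Y| * #|O| <= \sum_(y in Y) (#|tri T x y| + #|[set z in Y | T y z]| + #|O :\: Y|))%N.
  rewrite -sum_nat_const; apply: leq_sum => y yY; exact: leq_trans (h3 y yY) (h2 y yY).
rewrite !big_split /= sum_nat_const cOY mulnBr in s1.
have m1 : (#|Y| * #|Y| <= #|Y| * #|O|)%N by rewrite leq_mul2l cYO orbT.
move: m1 s1 h4 cYO; set a := (#|Y| * #|Y|)%N; set b := (#|Y| * #|O|)%N.
move: (\sum_(y in Y) #|tri T x y|)%N (\sum_(y in Y) #|[set z in Y | T y z]|)%N => t S. lia.
Qed.

Lemma cs_nat N (f : 'I_N -> nat) :
  ((\sum_i f i) * (\sum_i f i) <= N * \sum_i f i * f i)%N.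
Proof.
have h : forall a b : nat, (2 * (a * b) <= a * a + b * b)%N by move=> a b; have := nat_Cauchy a b; rewrite !expnS !expn0 !muln1 => -[].
rewrite big_distrlr /=.
rewrite -(leq_pmul2l (isT : 0 < 2)%N) big_distrr /=.
apply: (@leq_trans (\sum_i \sum_j (f i * f i + f j * f j))%N).
  apply: leq_sum => i _; rewrite big_distrr /=; apply: leq_sum => j _; exact: h.
have e : forall i, (\sum_j (f i * f i + f j * f j) = N * (f i * f i) + \sum_j f j * f j)%N.
  by move=> i; rewrite big_split /= sum_nat_const card_ord.
rewrite (eq_bigr _ (fun i _ => e i)) big_split /= sum_nat_const card_ord -big_distrr /=.
lia.
Qed.

Definition cycset N (T : rel 'I_N) :=
  [set p : 'I_N * 'I_N * 'I_N | T p.1.1 p.1.2 && T p.1.2 p.2 && T p.2 p.1.1].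

Lemma cyc_bound N (T : rel 'I_N) : tournament T ->
  (#|[set p : 'I_N * 'I_N | T p.1 p.2 && ~~ bef T p.1 p.2]| *
   #|[set p : 'I_N * 'I_N | T p.1 p.2 && ~~ bef T p.1 p.2]| <= 2 * N * #|cycset T|)%N.
Proof.
move=> hT.
have eB : #|[set p : 'I_N * 'I_N | T p.1 p.2 && ~~ bef T p.1 p.2]| = (\sum_x #|Yset T x|)%N.
  rewrite (card_pair (fun x y => T x y && ~~ bef T x y)); apply: eq_bigr => x _; apply: eq_card => y; rewrite !inE.
  case Txy: (T x y) => //=.
  have xy := tour_neq hT Txy.
  have [_ tot] := proj1 (bef_trans_tour T).
  by case/orP: (tot x y xy) => /andP [h1 h2]; [rewrite h1 (negbTE h2) | rewrite h1 h2].
have eC : (\sum_x \sum_(y in Yset T x) #|tri T x y| <= #|cycset T|)%N.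
  rewrite /cycset (card_triple (fun x y z => T x y && T y z && T z x)); apply: leq_sum => x _.
  rewrite big_mkcond /=; apply: leq_sum => y _.
  case: ifP => // yY; apply: subset_leq_card; apply/subsetP => z.
  move: yY; rewrite !inE => /andP [-> _] /andP [-> ->]; done.
rewrite eB; apply: leq_trans (cs_nat _) _.
rewrite (mulnC 2 N) -mulnA leq_mul2l; apply/orP; right.
apply: leq_trans _ (leq_mul (leqnn 2) eC).
rewrite big_distrr /=; apply: leq_sum => x _; exact: per_vertex.
Qed.

Definition Fcol N q (T : rel 'I_N) (col : 'I_N -> 'I_N -> 'I_q) (ka : 'I_q * 'I_q * 'I_q) :=
  [set p : 'I_N * 'I_N * 'I_N | (p \in cycset T) && (col p.1.1 p.1.2 == ka.1.1)
     && (col p.1.2 p.2 == ka.1.2) && (col p.2 p.1.1 == ka.2)].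

Lemma pigeon N q (T : rel 'I_N) (col : 'I_N -> 'I_N -> 'I_q) : (0 < q)%N ->
  exists ka, (#|cycset T| <= q * q * q * #|Fcol T col ka|)%N.
Proof.
move=> q0.
have cI : (0 < #|{: 'I_q * 'I_q * 'I_q}|)%N by rewrite !card_prod card_ord; nia.
have [ka eka] := @bigop.eq_bigmax _ (fun ka => #|Fcol T col ka|) cI.
exists ka; rewrite -eka.
apply: (@leq_trans (\sum_ka0 #|Fcol T col ka0|)%N).
  rewrite /cycset card_nat.
  rewrite (eq_bigr (fun ka0 => \sum_p ((p \in Fcol T col ka0) : nat))%N); last first.
    by move=> ka0 _; rewrite /Fcol card_nat; apply: eq_bigr => p _; rewrite inE.
  rewrite [X in (_ <= X)%N](exchange_big) /=; apply: leq_sum => p _.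
  apply: (@leq_trans ((p \in Fcol T col (col p.1.1 p.1.2, col p.1.2 p.2, col p.2 p.1.1)) : nat)).
    by rewrite /Fcol !inE /= !eqxx !andbT.
  by rewrite (bigD1 (col p.1.1 p.1.2, col p.1.2 p.2, col p.2 p.1.1)) //= leq_addr.
have -> : (q * q * q = #|{: 'I_q * 'I_q * 'I_q}|)%N by rewrite !card_prod card_ord.
rewrite -sum_nat_const.
by apply: leq_sum => i _; apply: (@bigop.leq_bigmax _ (fun ka => #|Fcol T col ka|)).
Qed.

Definition K q (ka : 'I_q * 'I_q * 'I_q) (j : nat) :=
  if j %% 3 == 0 then ka.1.1 else if j %% 3 == 1 then ka.1.2 else ka.2.

Lemma K3 q ka j : @K q ka (j + 3) = K ka j.
Proof. by rewrite /K modnDr. Qed.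

Lemma rot_F N q (T : rel 'I_N) col ka j (a b c : 'I_N) :
  rot j a b c \in @Fcol N q T col ka ->
  [/\ T a b, T b c & T c a] /\ [/\ col a b = K ka j, col b c = K ka j.+1 & col c a = K ka j.+2].
Proof.
rewrite /rot /K.
have [h|[h|h]] : j %% 3 = 0 \/ j %% 3 = 1 \/ j %% 3 = 2 by lia.
- have h1 : j.+1 %% 3 = 1 by lia.
  have h2 : j.+2 %% 3 = 2 by lia.
  rewrite h h1 h2 /= !inE /=.
  by case/andP => /andP [/andP [/andP [/andP [-> ->] ->] /eqP ->] /eqP ->] /eqP ->.
- have h1 : j.+1 %% 3 = 2 by lia.
  have h2 : j.+2 %% 3 = 0 by lia.
  rewrite h h1 h2 /= !inE /=.
  by case/andP => /andP [/andP [/andP [/andP [-> ->] ->] /eqP ->] /eqP ->] /eqP ->.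
- have h1 : j.+1 %% 3 = 0 by lia.
  have h2 : j.+2 %% 3 = 1 by lia.
  rewrite h h1 h2 /= !inE /=.
  by case/andP => /andP [/andP [/andP [/andP [-> ->] ->] /eqP ->] /eqP ->] /eqP ->.
Qed.

Local Open Scope ring_scope.

Lemma real_final (R : realType) (d n q L B : R) : 0 < d -> 0 < n -> 0 < q ->
  d * n ^+ 2 < B -> B * B <= 2 * n * (q * q * q * (6 * n * n * L)) ->
  1 / 12 * d ^+ 2 * n / q ^+ 3 <= L.
Proof.
move=> d0 n0 q0 h1 h2.
have e : 2 * n * (q * q * q * (6 * n * n * L)) = 12 * q ^+ 3 * n ^+ 3 * L by ring.
rewrite e -expr2 in h2.
have Q0 : 0 < q ^+ 3 by rewrite exprn_gt0.
move: (q ^+ 3) Q0 h2 => Q Q0 h2.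
rewrite ler_pdivrMr //.
have h3 : (d * n^+2)^+2 <= B^+2.
  have p1 : 0 <= d * n^+2 by rewrite mulr_ge0 // ?ltW // exprn_gt0.
  rewrite lerXn2r ?nnegrE //; [exact: le_trans p1 (ltW h1) | exact: ltW].
have h4 : 0 < n^+3 by rewrite exprn_gt0.
rewrite -(ler_pM2r h4).
nra.
Qed.

Lemma arith1 (k A d G : nat) : (A <= d -> 0 < d -> k * d <= G -> 0 < G -> k.-1 * A < G)%N.
Proof.
move=> h1 h2 h3 h4; case: k h3 => [|k] h3 //=.
have h5 : (k * A <= k * d)%N by rewrite leq_mul2l h1 orbT.
move: h3 h5; rewrite mulSn; move: (k * A)%N (k * d)%N => x y; lia.
Qed.

Unset Implicit Arguments.

Theorem theorem1p7 (R : realType) :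
  exists c : R, 0 < c /\
  forall (delta : R) (q N : nat) (T : rel 'I_N) (col : 'I_N -> 'I_N -> 'I_q),
    0 < delta -> (0 < q)%N -> (0 < N)%N ->
    tournament T -> far_from_transitive T delta ->
    (exists (v : nat -> 'I_N) (L : nat) (S : {set 'I_q}),
        c * delta ^+ 2 * N%:R / q%:R ^+ 3 <= L%:R /\
        dipath T v L /\ (#|S| <= 3)%N /\
        (forall j, (j.+1 < L)%N -> col (v j) (v j.+1) \in S)) /\
    (exists (v : nat -> 'I_N) (L : nat),
        c * delta ^+ 2 * N%:R / q%:R ^+ 3 <= L%:R /\
        dipath T v L /\
        (forall j, (j.+2 < L)%N -> T (v j.+2) (v j)) /\
        (forall j, (j + 4 < L)%N -> col (v j) (v j.+1) = col (v (j + 3)%N) (v (j + 4)%N)) /\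
        (forall j, (j + 5 < L)%N -> col (v j.+2) (v j) = col (v (j + 5)%N) (v (j + 3)%N))).
Proof.
exists (1 / 12); split; first lra.
move=> delta q N T col d0 q0 N0 hT hfar.
set B := #|[set p : 'I_N * 'I_N | T p.1 p.2 && ~~ bef T p.1 p.2]|.
have hB : delta * N%:R ^+ 2 < B%:R.
  rewrite ltNge; apply/negP => h; apply: hfar; exists (bef T); split; [exact: bef_trans_tour | exact: h].
have hC := cyc_bound hT.
have [ka hka] := pigeon T col q0.
set F := Fcol T col ka.
have B0 : (0 < B)%N.
  rewrite -(ltr0n R); apply: lt_trans hB; rewrite mulr_gt0 // exprn_gt0 // ltr0n //.
have G0 : (0 < #|F|)%N.
  move: hC hka; rewrite -/B -/F; move: (#|cycset T|) (#|F|) => C G; nia.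
set k := (#|F| %/ (3 * N * N))%N.
have hA : (#|active F| <= 3 * N * N)%N.
  apply: leq_trans (max_card _) _; rewrite !card_prod !card_ord; lia.
have hk : (k.-1 * #|active F| < #|F|)%N.
  apply: arith1 hA _ _ G0; first by nia.
  by rewrite /k leq_divM.
have [F' [sF' F'0 gF']] := clean (leqnn _) hk.
pose x0 := Ordinal N0.
have dist : forall a b c, (a, b, c) \in F' -> [&& a != b, b != c & c != a].
  move=> a b c /(subsetP sF'); rewrite /F /Fcol !inE /= => /andP [/andP [/andP [/andP [/andP [h1 h2] h3] _] _] _].
  by rewrite (tour_neq hT h1) (tour_neq hT h2) (tour_neq hT h3).
set L := maxn 3 k.
have [s [ss us hs]] := walk x0 gF' F'0 dist (leq_maxl 3 k) (leqnn L).
pose v := fun j => nth x0 s j.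
have trij : forall j, (j.+2 < L)%N ->
    [/\ T (v j) (v j.+1), T (v j.+1) (v j.+2) & T (v j.+2) (v j)] /\
    [/\ col (v j) (v j.+1) = K ka j, col (v j.+1) (v j.+2) = K ka j.+1 & col (v j.+2) (v j) = K ka j.+2].
  move=> j hj; exact: rot_F (subsetP sF' _ (hs j hj)).
have edge : forall j, (j.+1 < L)%N -> T (v j) (v j.+1) /\ col (v j) (v j.+1) = K ka j.
  move=> j hj; case: (ltnP j.+2 L) => h.
    by have [[? ? ?] [? ? ?]] := trij j h; split.
  have j0 : (0 < j)%N by move: hj h; rewrite /L; lia.
  have [[_ h2 _] [_ c2 _]] := trij j.-1 ltac:(lia).
  by rewrite (prednK j0) in h2 c2; split.
have dp : dipath T v L.
  split.
    move=> i j hi hj e; apply/eqP; rewrite -(nth_uniq x0 _ _ us) ?ss //; exact/eqP.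
  by move=> j hj; exact: (edge j hj).1.
have bound : 1 / 12 * delta ^+ 2 * N%:R / q%:R ^+ 3 <= L%:R.
  apply: (real_final d0 _ _ hB); rewrite ?ltr0n //.
  have hG : (#|F| <= 6 * N * N * L)%N.
    have := ltn_ceil #|F| (_ : 0 < 3 * N * N)%N; rewrite -/k.
    have kL : (k.+1 <= 2 * L)%N by rewrite /L; lia.
    move=> /(_ ltac:(nia)) h.
    apply: leq_trans (ltnW h) _.
    have := leq_mul kL (leqnn (3 * N * N)); move: (k.+1 * (3 * N * N))%N => x.
    move=> hx; apply: leq_trans hx _; rewrite mulnA; nia.
  have h1 : (B * B <= 2 * N * (q * q * q * (6 * N * N * L)))%N.
    apply: leq_trans hC _; rewrite leq_mul2l; apply/orP; right.
    apply: leq_trans hka _; rewrite leq_mul2l; apply/orP; right; exact: hG.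
  by move: h1; rewrite -(ler_nat R) !natrM.
split.
  exists v, L, [set x | x \in [:: ka.1.1; ka.1.2; ka.2]]; split => //; split => //; split.
    have e : #|[set x | x \in [:: ka.1.1; ka.1.2; ka.2]]| = #|[:: ka.1.1; ka.1.2; ka.2]|.
      by apply: eq_card => x; rewrite inE.
    by rewrite e; exact: (card_size [:: ka.1.1; ka.1.2; ka.2]).
  move=> j hj; rewrite (edge j hj).2 inE /K.
  by case: ifP => _; [|case: ifP => _]; rewrite !inE eqxx ?orbT.
exists v, L; split => //; split => //; split.
  by move=> j hj; have [[_ _ ->] _] := trij j hj.
split.
  move=> j hj; rewrite (edge j ltac:(lia)).2.
  have := (edge (j + 3)%N ltac:(lia)).2; rewrite -addnS => ->.
  by rewrite K3.
move=> j hj; have [_ [_ _ e1]] := trij j ltac:(lia).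
have [_ [_ _ e2]] := trij (j + 3)%N ltac:(lia).
rewrite e1.
have -> : (j + 5)%N = (j + 3).+2 by rewrite !addnS.
rewrite e2.
have -> : (j + 3).+2 = (j.+2 + 3)%N by lia.
by rewrite K3.
Qed.
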